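(* Let $x\in\mathbb{R}^n$. If $u\in\partial\|\cdot\|_{1,2}(Lx)$ (the subdifferential of $\|\cdot\|_{1,2}$ at $Lx$), then $P_{T_L^\perp}P_{T_z}u=0$.
   Context: Let $n,N\in\mathbb{N}$, let $G_1,\dots,G_N\subseteq\{1,\dots,n\}$ be nonempty groups, possibly overlapping, with $\bigcup_iG_i=\{1,\dots,n\}$, and weights $w_i>0$. $x_G$ is the subvector of $x$ indexed by $G$ (increasing order). Let $p=\sum_i|G_i|$, partition $\{1,\dots,p\}$ into consecutive blocks $J_i=\{\sum_{j<i}|G_j|+1,\dots,\sum_{j\le i}|G_j|\}$, and define $L\in\mathbb{R}^{p\times n}$ by $(Lx)_{J_i}=w_ix_{G_i}$. For $z\in\mathbb{R}^p$, $\|z\|_{1,2}=\sum_i\|z_{J_i}\|$ (Euclidean); $u\in\partial\|\cdot\|_{1,2}(z)$ iff $u_{J_i}=z_{J_i}/\|z_{J_i}\|$ when $z_{J_i}\ne0$ and $\|u_{J_i}\|\le1$ when $z_{J_i}=0$. For $x\in\mathbb{R}^n$: $\mathcal{I}_x=\{t:x_{G_t}\ne0\}$; $\mathcal{E}_x=\{1,\dots,n\}\setminus\bigcup_{t\notin\mathcal{I}_x}G_t$, $T_x=\{x':\mathrm{supp}(x')\subseteq\mathcal{E}_x\}$; $\mathcal{E}_z=\bigcup_{t\in\mathcal{I}_x}J_t$, $T_z=\{z':\mathrm{supp}(z')\subseteq\mathcal{E}_z\}$; $\mathcal{E}_L=\mathrm{supp}(LP_{T_x}\mathbf{1}_n)$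 with $\mathbf{1}_n$ the all-ones vector, $T_L=\{z':\mathrm{supp}(z')\subseteq\mathcal{E}_L\}$. $P_T$ is the orthogonal (coordinate) projection onto $T$ and $T^\perp$ its orthogonal complement. *)

(* Defs.v *)
From HB Require Import structures.
From mathcomp Require Import all_boot all_order all_algebra.
Unset Printing Implicit Defensive.
Import Order.TTheory GRing.Theory Num.Theory.
Local Open Scope ring_scope.

(* Indices {1..n} are rendered as 'I_n, groups as G : 'I_N -> {set 'I_n}. *)

Definition psize {n N : nat} (G : 'I_N -> {set 'I_n}) : nat :=
  (\sum_(i < N) #|G i|)%N.

Definition bstart {n N : nat} (G : 'I_N -> {set 'I_n}) (i : 'I_N) : nat :=
  (\sum_(j < N | (j < i)%N) #|G j|)%N.

Definition block {n N : nat} (G : 'I_N -> {set 'I_n}) (i : 'I_N)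
  : {set 'I_(psize G)} :=
  [set q : 'I_(psize G) | (bstart G i <= q < bstart G i + #|G i|)%N].

(* k-th element (0-based) of G_i in increasing order (enum of a set of
   ordinals lists its elements in increasing order) *)
Definition gmap {n N : nat} (G : 'I_N -> {set 'I_n}) (i : 'I_N) (k : nat) : nat :=
  nth 0%N [seq val j | j <- enum (G i)] k.

(* the matrix L : (Lx)_{J_i} = w_i x_{G_i} *)
Definition Lmat {R : nzRingType} {n N : nat} (G : 'I_N -> {set 'I_n}) (w : 'I_N -> R)
  : 'M[R]_(psize G, n) :=
  \matrix_(q, c) \sum_(i < N)
     (if (q \in block G i) && (val c == gmap G i (q - bstart G i)%N)
      then w i else 0).

(* coordinate projection onto T = {v | supp v ⊆ E} *)
Definition proj {R : nzRingType} {m : nat} (E : {set 'I_m}) (v : 'cV[R]_m) : 'cV[R]_m :=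
  \col_i (if i \in E then v i 0 else 0).

Definition blocknorm {R : rcfType} {n N : nat} (G : 'I_N -> {set 'I_n})
  (z : 'cV[R]_(psize G)) (i : 'I_N) : R :=
  Num.sqrt (\sum_(q in block G i) z q 0 ^+ 2).

(* u ∈ ∂‖·‖_{1,2}(z), as characterized in the paper *)
Definition subdiff12 {R : rcfType} {n N : nat} (G : 'I_N -> {set 'I_n})
  (u z : 'cV[R]_(psize G)) : Prop :=
  forall i : 'I_N,
    ([exists q in block G i, z q 0 != 0] ->
       forall q, q \in block G i -> u q 0 = z q 0 / blocknorm G z i)
    /\ (~~ [exists q in block G i, z q 0 != 0] -> blocknorm G u i <= 1).

Definition Ix {R : nzRingType} {n N : nat} (G : 'I_N -> {set 'I_n}) (x : 'cV[R]_n)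
  : {set 'I_N} :=
  [set t | [exists j in G t, x j 0 != 0]].

Definition Ex {R : nzRingType} {n N : nat} (G : 'I_N -> {set 'I_n}) (x : 'cV[R]_n)
  : {set 'I_n} :=
  ~: (\bigcup_(t | t \notin Ix G x) G t).

Definition Ez {R : nzRingType} {n N : nat} (G : 'I_N -> {set 'I_n}) (x : 'cV[R]_n)
  : {set 'I_(psize G)} :=
  \bigcup_(t in Ix G x) block G t.

Definition EL {R : nzRingType} {n N : nat} (G : 'I_N -> {set 'I_n}) (w : 'I_N -> R)
  (x : 'cV[R]_n) : {set 'I_(psize G)} :=
  [set q | (Lmat G w *m proj (Ex G x) (const_mx 1)) q 0 != 0].

(* Main.v *)
Require Import Defs.
From HB Require Import structures.
From mathcomp Require Import all_boot all_order all_algebra.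
From mathcomp Require Import zify.
Import Order.TTheory GRing.Theory Num.Theory.
Local Open Scope ring_scope.

Lemma bstart_lt {n N : nat} (G : 'I_N -> {set 'I_n}) (i t : 'I_N) :
  (i < t)%N -> (bstart G i + #|G i| <= bstart G t)%N.
Proof.
move=> lit; rewrite /bstart [X in (_ <= X)%N](bigID (fun j : 'I_N => (j < i)%N)) /=.
rewrite [X in (_ <= X + _)%N](eq_bigl (fun j : 'I_N => (j < i)%N)); last first.
  move=> j /=; apply/andP/idP => [[]//|ji]; split=> //; exact: ltn_trans ji lit.
rewrite leq_add2l (bigD1 i) /=; last by rewrite lit ltnn.
exact: leq_addr.
Qed.

Lemma bstart_le {n N : nat} (G : 'I_N -> {set 'I_n}) (t : 'I_N) :
  (bstart G t + #|G t| <= psize G)%N.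
Proof.
rewrite /psize /bstart [X in (_ <= X)%N](bigID (fun j : 'I_N => (j < t)%N)) /= leq_add2l.
rewrite (bigD1 t) /=; last by rewrite ltnn.
exact: leq_addr.
Qed.

Lemma block_disj {n N : nat} (G : 'I_N -> {set 'I_n}) (i t : 'I_N) q :
  q \in block G i -> q \in block G t -> i = t.
Proof.
rewrite !inE => /andP[a1 a2] /andP[b1 b2].
case: (ltngtP i t) => [lit|lti|/val_inj //].
- have := bstart_lt G _ _ lit; lia.
- have := bstart_lt G _ _ lti; lia.
Qed.

Lemma Lmat_row {R : nzRingType} {n N : nat} (G : 'I_N -> {set 'I_n})
  (w : 'I_N -> R) (t : 'I_N) (q : 'I_(psize G)) :
  q \in block G t ->
  exists c0 : 'I_n, [/\ c0 \in G t, val c0 = gmap G t (q - bstart G t) &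
    forall y : 'cV[R]_n, (Lmat G w *m y) q 0 = w t * y c0 0].
Proof.
move=> qb; have := qb; rewrite inE => /andP[q1 q2].
have kl : (q - bstart G t < size (enum (G t)))%N.
  rewrite -cardE; lia.
case E: (enum (G t)) kl => [|d s] //= kl.
exists (nth d (enum (G t)) (q - bstart G t)).
have c0G : nth d (enum (G t)) (q - bstart G t) \in G t.
  by rewrite -mem_enum mem_nth // E.
have vc : val (nth d (enum (G t)) (q - bstart G t)) = gmap G t (q - bstart G t).
  by rewrite /gmap (nth_map d) // E.
split=> // y; rewrite mxE (bigD1 (nth d (enum (G t)) (q - bstart G t))) //=.
rewrite big1 ?addr0.
  rewrite mxE (bigD1 t) //= qb -vc eqxx /= big1 ?addr0 // => i it.
  case: ifP => // /andP[qi _]; by rewrite (block_disj _ _ _ _ qi qb) eqxx in it.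
move=> c cne; rewrite mxE (bigD1 t) //= qb /= big1 ?addr0.
  case: ifP => [/eqP e|]; last by rewrite mul0r.
  by case/eqP: cne; apply: val_inj; rewrite /= e vc.
move=> i it; case: ifP => // /andP[qi _]; by rewrite (block_disj _ _ _ _ qi qb) eqxx in it.
Qed.

Lemma block_hit {n N : nat} (G : 'I_N -> {set 'I_n}) (t : 'I_N) (j : 'I_n) :
  j \in G t -> exists2 q : 'I_(psize G), q \in block G t &
     val j = gmap G t (q - bstart G t).
Proof.
move=> jG.
have kl : (index j (enum (G t)) < #|G t|)%N by rewrite cardE index_mem mem_enum.
have ql : (bstart G t + index j (enum (G t)) < psize G)%N.
  have := bstart_le G t; lia.
exists (Ordinal ql); first by rewrite inE /= leq_addr ltn_add2l.
rewrite /= addKn /gmap (nth_map j) ?index_mem ?mem_enum //.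
by rewrite nth_index // mem_enum.
Qed.

Theorem lemmaA3 (R : rcfType) (n N : nat) (G : 'I_N -> {set 'I_n})
  (w : 'I_N -> R) (x : 'cV[R]_n) (u : 'cV[R]_(psize G)) :
  (forall i, G i != set0) ->
  \bigcup_(i < N) G i = [set: 'I_n] ->
  (forall i, 0 < w i) ->
  subdiff12 G u (Lmat G w *m x) ->
  proj (~: EL G w x) (proj (Ez G x) u) = 0.
Proof.
move=> _ _ wpos sd; apply/matrixP => q j; rewrite !mxE.
case: ifP => // qEL; case: ifP => // /bigcupP[t tI qb].
have [c0 [c0G vc0 Lq]] := Lmat_row G w _ _ qb.
have wt0 : w t != 0 by rewrite gt_eqF.
have c0Ex : c0 \notin Ex G x.
  apply/negP => cE; move: qEL; rewrite !inE Lq !mxE cE.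
  by rewrite mulr1 wt0.
have xc0 : x c0 0 = 0.
  move: c0Ex; rewrite inE negbK => /bigcupP[s sI c0s].
  move: sI; rewrite inE => /existsPn /(_ c0); rewrite c0s /=.
  by move/negPn/eqP.
move: tI; rewrite inE => /existsP[j' /andP[j'G xj']].
have [q' q'b vq'] := block_hit G _ _ j'G.
have [c1 [c1G vc1 Lq']] := Lmat_row G w _ _ q'b.
have c1j : c1 = j' by apply: val_inj; rewrite vc1 vq'.
have ex : [exists q0 in block G t, (Lmat G w *m x) q0 0 != 0].
  apply/existsP; exists q'; rewrite q'b /= Lq' c1j mulf_neq0 //.
have [h _] := sd t.
by rewrite (h ex q qb) Lq xc0 mulr0 mul0r.
Qed.
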